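(* Let $H=(V,E)$ be a downward-closed hypergraph (for every $e\in E$ and every $e'\subseteq e$ with $|e'|>1$, $e'\in E$), and let $F$ be a facet of $\mathrm{MP}^H$. Define $V_1^F=\{I\in V: \forall z\in\mathrm{MP}^H,\ z_I=1 \text{ implies } z\in F\}$, and for $U\subseteq V$ define $E_U=\{e\in L(V)\cup E\cup\{\varnothing\}: e\subseteq V\setminus U,\ e\cup U\in L(V)\cup E\}$ and $F_U=\{z\in F: z_I=0\ \forall I\in U\}$. If $U\subseteq V\setminus V_1^F$ is nonempty, then either $E_U$ is empty, or the projection $\operatorname{proj}_{E_U\setminus\{\varnothing\}}F_U$ is full-dimensional in $\mathbb{R}^{E_U\setminus\{\varnothing\}}$.
   Context: A hypergraph $H=(V,E)$ here has a finite vertex set $V$ and hyperedge set $E$ consisting of subsets $e\subseteq V$ with $|e|\ge 2$. Write $L(V)=\{\{I\}: I\in V\}$. The multilinear set is $\mathcal{S}^H=\{z\in\{0,1\}^{L(V)\cup E}: z_e=\prod_{I\in e}z_I\ \forall e\in E\}$, where $z_I=z_{\{I\}}$, and the multilinear polytope is $\mathrm{MP}^H=\operatorname{conv}\mathcal{S}^H$. $\operatorname{proj}_{S'}$ extracts the coordinates indexed by $S'$. *)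

(* Defs.v *)
From mathcomp Require Import all_boot all_order all_algebra.
Set Implicit Arguments. Unset Strict Implicit. Unset Printing Implicit Defensive.
Import Order.TTheory GRing.Theory Num.Theory.
Local Open Scope ring_scope.

Section Defs.
Variables (R : realFieldType) (V : finType).

(* Ambient vectors: real functions on subsets of V; coordinates outside
   the relevant index set are required to be 0 where relevant. *)
Local Notation vec := {ffun {set V} -> R}.

Definition hypergraph (E : {set {set V}}) : Prop :=
  forall e, e \in E -> (2 <= #|e|)%N.

Definition downward_closed (E : {set {set V}}) : Prop :=
  forall e e' : {set V}, e \in E -> e' \subset e -> (1 < #|e'|)%N -> e' \in E.

Definition LV : {set {set V}} := [set [set i] | i : V].

Definition coords (E : {set {set V}}) : {set {set V}} := LV :|: E.

(* the multilinear set S^H, embedded in vec (zero outside L(V) u E) *)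
Definition mlset (E : {set {set V}}) (z : vec) : Prop :=
  [/\ forall e, e \notin coords E -> z e = 0,
      forall i : V, z [set i] = 0 \/ z [set i] = 1 &
      forall e, e \in E -> z e = \prod_(i in e) z [set i]].

Definition scv (c : R) (v : vec) : vec := [ffun e => c * v e].

Definition conv (S : vec -> Prop) (z : vec) : Prop :=
  exists (n : nat) (lam : 'I_n -> R) (p : 'I_n -> vec),
    [/\ forall k, 0 <= lam k, \sum_k lam k = 1, forall k, S (p k) &
        z = \sum_k scv (lam k) (p k)].

Definition MP (E : {set {set V}}) : vec -> Prop := conv (mlset E).

Definition dotv (a z : vec) : R := \sum_e a e * z e.

Definition is_face (P F : vec -> Prop) : Prop :=
  exists (a : vec) (b : R),
    (forall z, P z -> dotv a z <= b) /\
    (forall z, F z <-> P z /\ dotv a z = b).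

Definition lin_indep (k : nat) (w : 'I_k -> vec) : Prop :=
  forall c : 'I_k -> R, \sum_i scv (c i) (w i) = 0 -> forall i, c i = 0.

Definition affdim_ge (S : vec -> Prop) (k : nat) : Prop :=
  exists p : 'I_k.+1 -> vec,
    (forall i, S (p i)) /\ lin_indep (fun i : 'I_k => p (lift ord0 i) - p ord0).

(* S has (affine) dimension d (d = -1 for the empty set) *)
Definition dim_eq (S : vec -> Prop) (d : int) : Prop :=
  forall k : nat, affdim_ge S k <-> (k%:Z <= d).

Definition is_facet (P F : vec -> Prop) : Prop :=
  is_face P F /\ exists d : int, dim_eq P d /\ dim_eq F (d - 1).

Definition V1 (E : {set {set V}}) (F : vec -> Prop) (I : V) : Prop :=
  forall z, MP E z -> z [set I] = 1 -> F z.

Definition EU (E : {set {set V}}) (U : {set V}) : {set {set V}} :=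
  [set e | ((e \in coords E) || (e == set0)) && [disjoint e & U]
           && ((e :|: U) \in coords E)].

Definition FU (F : vec -> Prop) (U : {set V}) (z : vec) : Prop :=
  F z /\ forall I, I \in U -> z [set I] = 0.

Definition projv (D : {set {set V}}) (z : vec) : vec :=
  [ffun e => if e \in D then z e else 0].

Definition image_proj (D : {set {set V}}) (S : vec -> Prop) (y : vec) : Prop :=
  exists z, S z /\ y = projv D z.

(* S is full-dimensional in R^D: S lives in R^D and has dimension |D| *)
Definition fulldim_in (D : {set {set V}}) (S : vec -> Prop) : Prop :=
  (forall y, S y -> forall e, e \notin D -> y e = 0) /\ dim_eq S #|D|%:Z.

End Defs.

(* Main.v *)
Require Import Defs.
From mathcomp Require Import all_boot all_order all_algebra.
From Stdlib Require Import Classical_Prop.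
Import Order.TTheory GRing.Theory Num.Theory.
Local Open Scope ring_scope.
Set Implicit Arguments. Unset Strict Implicit. Unset Printing Implicit Defensive.

Section Lin.
Variables (R : realFieldType) (V : finType).
Local Notation vec := {ffun {set V} -> R}.

Lemma dotvD (a u v : vec) : dotv a (u + v) = dotv a u + dotv a v.
Proof. by rewrite /dotv -big_split /=; apply: eq_bigr => e _; rewrite ffunE mulrDr. Qed.

Lemma dotvN (a u : vec) : dotv a (- u) = - dotv a u.
Proof. by rewrite /dotv -sumrN; apply: eq_bigr => e _; rewrite ffunE mulrN. Qed.

Lemma dotvB (a u v : vec) : dotv a (u - v) = dotv a u - dotv a v.
Proof. by rewrite dotvD dotvN. Qed.

Lemma dotv0 (a : vec) : dotv a 0 = 0.
Proof. by rewrite /dotv big1 // => e _; rewrite ffunE mulr0. Qed.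

Lemma dotvZ (a : vec) c u : dotv a (scv c u) = c * dotv a u.
Proof. by rewrite /dotv mulr_sumr; apply: eq_bigr => e _; rewrite ffunE mulrCA. Qed.

Lemma dotv_sum (a : vec) n (c : 'I_n -> R) (w : 'I_n -> vec) :
  dotv a (\sum_i scv (c i) (w i)) = \sum_i c i * dotv a (w i).
Proof.
elim/big_ind2: _ => //; first by rewrite dotv0.
  by move=> x1 x2 y1 y2 <- <-; rewrite dotvD.
by move=> i _; rewrite dotvZ.
Qed.

Lemma sum_scv_app n (c : 'I_n -> R) (w : 'I_n -> vec) e :
  (\sum_i scv (c i) (w i)) e = \sum_i c i * w i e.
Proof. by rewrite sum_ffunE; apply: eq_bigr => i _; rewrite ffunE. Qed.

Definition delta (e0 : {set V}) : vec := [ffun e => (e == e0)%:R].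

Lemma dotv_delta e0 (v : vec) : dotv (delta e0) v = v e0.
Proof.
rewrite /dotv (bigD1 e0) //= big1 ?addr0; first by rewrite ffunE eqxx mul1r.
by move=> e /negbTE ne; rewrite ffunE ne mul0r.
Qed.

Lemma affdim_ext (S : vec -> Prop) k (p : 'I_k.+1 -> vec) (L : vec) z :
  (forall i, S (p i)) ->
  lin_indep (fun i : 'I_k => p (lift ord0 i) - p ord0) ->
  (forall i, dotv L (p i) = dotv L (p ord0)) ->
  dotv L z != dotv L (p ord0) -> S z -> affdim_ge S k.+1.
Proof.
move=> Sp ind Lp Lz Sz.
pose q (i : 'I_k.+2) := if (i < k.+1)%N then p (inord i) else z.
have q0 : q ord0 = p ord0 by rewrite /q /=; congr p; apply: val_inj; rewrite /= inordK.
exists q; split.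
  by move=> i; rewrite /q; case: ifP.
move=> c; rewrite big_ord_recr /= => hs.
have qmax : q (lift ord0 ord_max) = z by rewrite /q /= ltnn.
have ql : forall i : 'I_k, q (lift ord0 (widen_ord (leqnSn k) i)) = p (lift ord0 i).
  move=> i; rewrite /q /= ltnS ltn_ord; congr p; apply: val_inj.
  by rewrite /= inordK // ltnS ltn_ord.
have := congr1 (dotv L) hs; rewrite dotv0 dotvD dotv_sum dotvZ big1 ?add0r.
  rewrite qmax q0 dotvB => /eqP; rewrite mulf_eq0 subr_eq0 (negbTE Lz) orbF => /eqP cmax.
  have cw : forall i : 'I_k, c (widen_ord (leqnSn k) i) = 0.
    apply: ind; rewrite -[RHS]hs cmax.
    have -> : scv 0 (q (lift ord0 ord_max) - q ord0) = 0 :> vec.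
      by apply/ffunP => e; rewrite !ffunE mul0r.
    by rewrite addr0; apply: eq_bigr => i _; rewrite ql q0.
  move=> i; case: (unliftP ord_max i) => [j ->|->] //.
  by have -> : lift ord_max j = widen_ord (leqnSn k) j by apply: val_inj; exact: lift_max.
by move=> i _; rewrite ql q0 dotvB !Lp subrr mulr0.
Qed.

Lemma ker_nz m n (A : 'M[R]_(m, n)) : (\rank A < m)%N ->
  exists u : 'rV_m, u != 0 /\ u *m A = 0.
Proof.
move=> hr.
have : kermx A != 0.
  by rewrite -mxrank_eq0 mxrank_ker subn_eq0 -ltnNge.
case: (boolP [exists i, row i (kermx A) != 0]).
  move=> /existsP [i hi]; exists (row i (kermx A)); split => //.
  by rewrite -row_mul mulmx_ker row0.
rewrite negb_exists => /forallP hall /eqP[]; apply/row_matrixP => i.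
by rewrite row0; apply/eqP; rewrite -[_ == _]negbK hall.
Qed.

Lemma rv_nz m (u : 'rV[R]_m) : u != 0 -> exists j, u 0 j != 0.
Proof.
move=> hu; apply/existsP; apply: contraR hu; rewrite negb_exists => /forallP h.
apply/eqP/matrixP => i j; rewrite ord1 mxE; apply/eqP.
by rewrite -[_ == _]negbK h.
Qed.

Lemma dual_exists (D : {set {set V}}) k (w : 'I_k -> vec) : (k < #|D|)%N ->
  exists c : vec, (exists2 e, e \in D & c e != 0) /\ forall i, dotv c (w i) = 0.
Proof.
move=> hk.
pose A : 'M[R]_(#|D|, k) := \matrix_(j, i) w i (enum_val j).
have [|u [un uA]] := @ker_nz _ _ A.
  by apply: leq_ltn_trans (rank_leq_col _) hk.
have [j0 hj0] := rv_nz un.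
exists [ffun e => \sum_j (if enum_val j == e then u 0 j else 0)]; split.
  exists (enum_val j0); first exact: enum_valP.
  rewrite ffunE (bigD1 j0) //= eqxx big1 ?addr0 // => j nj.
  by rewrite (inj_eq enum_val_inj) (negbTE nj).
move=> i; have h := (proj2 (matrixP _ _) uA) 0 i; rewrite !mxE in h; apply: etrans h.
rewrite /dotv.
under eq_bigr => e _ do rewrite ffunE mulr_suml.
rewrite exchange_big /=; apply: eq_bigr => j _; rewrite mxE.
rewrite (bigD1 (enum_val j)) //= eqxx big1 ?addr0 // => e ne.
by rewrite eq_sym (negbTE ne) mul0r.
Qed.

Lemma indep_card (D : {set {set V}}) k (w : 'I_k -> vec) :
  lin_indep w -> (forall i e, e \notin D -> w i e = 0) -> (k <= #|D|)%N.
Proof.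
move=> ind sup; rewrite leqNgt; apply/negP => hk.
pose B : 'M[R]_(k, #|D|) := \matrix_(i, j) w i (enum_val j).
have [|u [un uB]] := @ker_nz _ _ B.
  by apply: leq_ltn_trans (rank_leq_col _) hk.
have [j0 /eqP[]] := rv_nz un.
apply: (ind (fun i => u 0 i)); apply/ffunP => e; rewrite sum_ffunE ffunE.
case: (boolP (e \in D)) => he.
  have h := (proj2 (matrixP _ _) uB) 0 (enum_rank_in he e); rewrite !mxE in h; rewrite -[RHS]h.
  apply: eq_bigr => i _; rewrite ffunE mxE enum_rankK_in //.
by apply: big1 => i _; rewrite ffunE sup // mulr0.
Qed.

Lemma affdim0 (S : vec -> Prop) y : S y -> affdim_ge S 0.
Proof. by move=> Sy; exists (fun _ => y); split => // c _ [i hi]. Qed.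

Lemma facet_vanish (P F : vec -> Prop) (a : vec) b d (hv : vec) h0 y :
  (forall z, F z <-> P z /\ dotv a z = b) -> dim_eq P d -> dim_eq F (d - 1) ->
  P y -> dotv a y != b -> (forall z, F z -> dotv hv z + h0 = 0) ->
  dotv hv y + h0 = 0 -> forall z, P z -> dotv hv z + h0 = 0.
Proof.
move=> hF dP dF Py ay hvF hvy z Pz; apply/eqP; apply: contraT => hz.
pose S1 v := P v /\ dotv hv v + h0 = 0.
have step2 : forall m, affdim_ge S1 m -> affdim_ge P m.+1.
  move=> m [q [Sq indq]].
  apply: (affdim_ext (L := hv) (z := z) _ indq) => //.
  - by move=> i; case: (Sq i).
  - move=> i; apply: (@addIr _ h0); case: (Sq i) => _ ->; by case: (Sq ord0) => _ ->.
  - apply: contra hz => /eqP e; apply/eqP; rewrite e; by case: (Sq ord0).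
have d0 : 0 <= d by apply/(dP 0%N).1; exact: (affdim0 Py).
case: d d0 dP dF => // n _ dP dF.
case: n dP dF => [|m0] dP dF.
  have := (dP 1%N).1 (step2 0%N (affdim0 (conj Py hvy))); by rewrite lez_nat.
have hm : (m0.+1%:Z - 1 = m0%:Z) by rewrite intS addrC addKr.
rewrite hm in dF.
have [p [Fp indp]] := (dF m0).2 (lexx _).
have : affdim_ge S1 m0.+1.
  apply: (affdim_ext (L := a) (z := y) _ indp) => //.
  - by move=> i; have [/hF[Pp _]] := (conj (Fp i) (Fp i)); split => //; exact: hvF.
  - by move=> i; rewrite (proj2 (proj1 (hF _) (Fp i))) (proj2 (proj1 (hF _) (Fp ord0))).
  - by rewrite (proj2 (proj1 (hF _) (Fp ord0))).
move=> /step2 /(dP _).1; by rewrite lez_nat ltnn.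
Qed.

Lemma dual_ind (D : {set {set V}}) (S : vec -> Prop) k : (k <= #|D|)%N ->
  affdim_ge S k \/ exists (c : vec) (c0 : R),
    ((c0 != 0) \/ exists2 e, e \in D & c e != 0) /\ forall y, S y -> dotv c y + c0 = 0.
Proof.
elim: k => [_|k IH hk].
  case: (classic (exists y, S y)) => [[y Sy]|nS]; first by left; exact: affdim0 Sy.
  right; exists 0, 1; split; first by left; exact: oner_neq0.
  by move=> y Sy; case: nS; exists y.
case: (IH (ltnW hk)) => [[p [Sp indp]]|]; last by right.
have [c [ce hc]] := dual_exists (fun i : 'I_k => p (lift ord0 i) - p ord0) hk.
case: (classic (exists y, S y /\ dotv c y != dotv c (p ord0))) => [[y [Sy hy]]|ny].
  left; apply: (affdim_ext (L := c) (z := y) Sp indp) => // i.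
  case: (unliftP ord0 i) => [j ->|-> //].
  by apply/eqP; rewrite -subr_eq0 -dotvB hc.
right; exists c, (- dotv c (p ord0)); split; first by right.
move=> y Sy; apply/eqP; rewrite subr_eq0; apply: contraT => ne.
by exfalso; apply: ny; exists y.
Qed.

Lemma affdim_le (D : {set {set V}}) (S : vec -> Prop) k :
  (forall y, S y -> forall e, e \notin D -> y e = 0) -> affdim_ge S k -> (k <= #|D|)%N.
Proof.
move=> sup [p [Sp indp]]; apply: (indep_card indp) => i e he.
by rewrite !ffunE !(sup _ (Sp _)) // subrr.
Qed.

End Lin.
Section Poly.
Variables (R : realFieldType) (V : finType) (E : {set {set V}}).
Local Notation vec := {ffun {set V} -> R}.
Hypothesis hE : hypergraph E.
Hypothesis dE : downward_closed E.
Local Notation C := (coords E).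

Lemma set0_notin_C : set0 \notin C.
Proof.
rewrite /coords in_setU negb_or; apply/andP; split.
  apply/imsetP => -[i _ /eqP]; rewrite eq_sym -cards_eq0 cards1 //.
by apply/negP => /hE; rewrite cards0.
Qed.

Lemma downC (e e' : {set V}) : e \in C -> e' \subset e -> e' != set0 -> e' \in C.
Proof.
move=> eC sub ne.
have : (0 < #|e'|)%N by rewrite card_gt0.
rewrite leq_eqVlt => /orP[/eqP/esym/eqP/cards1P [i ->]|gt1].
  by rewrite in_setU; apply/orP; left; apply/imsetP; exists i.
move: eC; rewrite in_setU => /orP[/imsetP[i _ ei]|eE].
  by move: (subset_leq_card sub); rewrite ei cards1 => /(leq_trans gt1).
by rewrite in_setU (dE eE sub gt1) orbT.
Qed.

Definition vert (X : {set V}) : vec :=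
  [ffun e => if (e \in C) && (e \subset X) then 1 else 0].

Lemma prod01 (e X : {set V}) :
  \prod_(i in e) (if i \in X then 1 else 0 : R) = if e \subset X then 1 else 0.
Proof.
case: (boolP (e \subset X)) => sub.
  by apply: big1 => i ie; rewrite (subsetP sub i ie).
have [i /andP [ie niX]] : exists i, (i \in e) && (i \notin X).
  by apply/existsP; move: sub; apply: contraR; rewrite negb_exists => /forallP h;
     apply/subsetP => j je; move: (h j); rewrite je /= negbK.
by rewrite (bigD1 i) //= (negbTE niX) mul0r.
Qed.

Lemma singC (i : V) : [set i] \in C.
Proof. by rewrite in_setU; apply/orP; left; apply/imsetP; exists i. Qed.

Lemma vert_sing X i : vert X [set i] = if i \in X then 1 else 0.
Proof. by rewrite ffunE singC sub1set. Qed.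

Lemma vert_ml X : mlset E (vert X).
Proof.
split.
- by move=> e /negbTE ne; rewrite ffunE ne.
- by move=> i; rewrite vert_sing; case: ifP; [right|left].
- move=> e eE; rewrite ffunE in_setU eE orbT /=.
  by rewrite -prod01; apply: eq_bigr => i _; rewrite vert_sing.
Qed.

Lemma ml_vert z : mlset E z -> z = vert [set i | z [set i] == 1].
Proof.
case=> h0 h01 hp; apply/ffunP => e; rewrite ffunE.
case: (boolP (e \in C)) => eC /=; last by rewrite h0.
move: (eC); rewrite in_setU => /orP[/imsetP[i _ ->]|eE].
  rewrite sub1set inE; case: (h01 i) => ->; rewrite ?eqxx //.
  by rewrite eq_sym oner_eq0.
rewrite hp // -prod01; apply: eq_bigr => i _; rewrite inE.
by case: (h01 i) => ->; rewrite ?eqxx // eq_sym oner_eq0.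
Qed.

Lemma vert_MP X : MP E (vert X).
Proof.
exists 1%N, (fun _ => 1), (fun _ => vert X); split.
- by move=> _; exact: ler01.
- by rewrite big_ord1.
- by move=> _; exact: vert_ml.
- by rewrite big_ord1; apply/ffunP => e; rewrite !ffunE mul1r.
Qed.

Lemma aff_conv n (lam : 'I_n -> R) (p : 'I_n -> vec) (g : vec) g0 :
  \sum_k lam k = 1 ->
  dotv g (\sum_k scv (lam k) (p k)) + g0 = \sum_k lam k * (dotv g (p k) + g0).
Proof.
move=> s1.
have -> : dotv g (\sum_k scv (lam k) (p k)) = \sum_k lam k * dotv g (p k).
  elim/big_ind2: _ => //.
  - by rewrite /dotv big1 // => e _; rewrite ffunE mulr0.
  - move=> x1 x2 y1 y2 <- <-; rewrite /dotv -big_split /=; apply: eq_bigr => e _.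
    by rewrite ffunE mulrDr.
  - by move=> i _; rewrite /dotv mulr_sumr; apply: eq_bigr => e _; rewrite ffunE mulrCA.
rewrite -{1}[g0]mul1r -s1 mulr_suml -big_split; apply: eq_bigr => i _ /=; rewrite mulrDr.
by []. Qed.

Lemma conv_tight n (lam : 'I_n -> R) (p : 'I_n -> vec) (g : vec) g0 :
  (forall k, 0 <= lam k) -> \sum_k lam k = 1 ->
  (forall k, dotv g (p k) + g0 <= 0) ->
  dotv g (\sum_k scv (lam k) (p k)) + g0 = 0 ->
  forall k, lam k != 0 -> dotv g (p k) + g0 = 0.
Proof.
move=> l0 s1 le0; rewrite aff_conv // => /eqP.
rewrite -oppr_eq0 -sumrN psumr_eq0 => [/allP hall k lk|k _].
  have := hall k (mem_index_enum _); rewrite /= oppr_eq0 mulf_eq0 (negbTE lk) /=.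
  by move/eqP.
by rewrite oppr_ge0; apply: mulr_ge0_le0.
Qed.

Lemma conv_zero n (lam : 'I_n -> R) (p : 'I_n -> vec) (g : vec) g0 :
  \sum_k lam k = 1 ->
  (forall k, lam k != 0 -> dotv g (p k) + g0 = 0) ->
  dotv g (\sum_k scv (lam k) (p k)) + g0 = 0.
Proof.
move=> s1 h; rewrite aff_conv //; apply: big1 => k _.
by case: (eqVneq (lam k) 0) => [->|/h ->]; rewrite ?mul0r ?mulr0.
Qed.


Section Eval.
Variable U : {set V}.
Hypothesis UC : U \in C.
Local Notation D := (EU E U :\ set0).

Definition eval (h : vec) (X : {set V}) : R := \sum_(e : {set V} | e \subset X) h e.
Definition Top (u : V) (h : vec) : vec := [ffun e : {set V} => if u \in e then - h (e :\ u) else h e].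

Lemma evalT u h X : eval (Top u h) X = if u \in X then 0 else eval h X.
Proof.
rewrite /eval (bigID (fun e : {set V} => u \in e)) /=.
case: (boolP (u \in X)) => uX.
  rewrite (reindex_onto (fun e : {set V} => u |: e) (fun e : {set V} => e :\ u)) /=; last first.
    by move=> e /andP[_ ue]; rewrite setD1K.
  rewrite -[X in _ + X = _](opprK) -sumrN; apply/eqP; rewrite subr_eq0; apply/eqP.
  apply: eq_big => [e|e].
    rewrite subUset sub1set uX setU11 /= andbT.
    case: (boolP (u \in e)) => ue; last by rewrite setU1K // eqxx.
    have -> : ((u |: e) :\ u == e) = false.
      by apply/negbTE/negP => /eqP h'; have := setD11 u (u |: e); rewrite h' ue.
    by rewrite !andbF.
  case/andP => /andP[_ _] /eqP he.
  by rewrite !ffunE setU11 he; case: (boolP (u \in e)) => ue //; rewrite -he setD11 in ue.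
rewrite big1 ?add0r; last first.
  by move=> e /andP[sub ue]; move: uX; rewrite (subsetP sub u ue).
apply: eq_big => [e|e /andP[_ ue]]; last by rewrite ffunE (negbTE ue).
case: (boolP (e \subset X)) => //= sub.
by apply/negP => ue; move: uX; rewrite (subsetP sub u ue).
Qed.

Lemma evalF s g X :
  eval (foldr Top g s) X = if has (fun u => u \in X) s then 0 else eval g X.
Proof.
elim: s => [|u s IH] //=; rewrite evalT IH.
by case: (u \in X).
Qed.

Definition Qs (e : {set V}) : bool := (e :\: U == set0) || (e :\: U \in D).

Lemma suppF s (g : vec) : all (fun u => u \in U) s ->
  (forall e, g e != 0 -> Qs e) -> forall e, foldr Top g s e != 0 -> Qs e.
Proof.
elim: s => [|u s IH] //= /andP[uU alls] hg e.
rewrite ffunE; case: (boolP (u \in e)) => ue; last exact: IH.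
rewrite oppr_eq0 => /(IH alls hg); rewrite /Qs.
have -> : (e :\ u) :\: U = e :\: U.
  by apply/setP => x; rewrite !inE; case: eqVneq => // ->; rewrite uU.
by [].
Qed.

Lemma DC e : e \in D -> e \in C.
Proof.
rewrite !inE => /andP[ne /andP[/andP[/orP[//|/eqP e0] _] _]].
by move: ne; rewrite e0 eqxx.
Qed.

Lemma Ddisj e : e \in D -> [disjoint e & U].
Proof. by rewrite !inE => /andP[_ /andP[/andP[_ ->] _]]. Qed.

Lemma Qs_C e : Qs e -> (e == set0) || (e \in C).
Proof.
case: (eqVneq e set0) => //= ne.
have sub : e \subset (e :\: U) :|: U.
  by apply/subsetP => x xe; rewrite !inE xe; case: (x \in U).
case/orP => [/eqP e0|].
  by move: sub; rewrite e0 set0U => sub; exact: (downC UC sub ne).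
rewrite in_setD1 in_set => /andP[_ /andP[_ hC]].
exact: (downC hC sub ne).
Qed.

Lemma eval_dot (h : vec) X : (forall e, h e != 0 -> (e == set0) || (e \in C)) ->
  eval h X = dotv h (vert X) + h set0.
Proof.
move=> hs; rewrite /eval (bigD1 set0) ?sub0set //= addrC; congr (_ + _).
rewrite /dotv big_mkcond /=; apply: eq_bigr => e _; rewrite ffunE.
case: (eqVneq e set0) => [->|ne] /=.
  by rewrite (negbTE set0_notin_C) andbF mulr0.
rewrite andbT.
case: (boolP (e \in C)) => eC /=; first by case: (e \subset X); rewrite ?mulr1 ?mulr0.
have -> : h e = 0.
  by apply/eqP; move: (hs e); rewrite (negbTE ne) (negbTE eC); case: (h e == 0) => //; apply.
by rewrite mulr0; case: ifP.
Qed.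

Definition Gt (c : vec) (c0 : R) : vec :=
  [ffun e : {set V} => if e == set0 then c0 else if e \in D then c e else 0].

Lemma Gt_Qs c c0 e : Gt c c0 e != 0 -> Qs e.
Proof.
rewrite ffunE /Qs; case: (eqVneq e set0) => [-> _|ne]; first by rewrite set0D eqxx.
case: ifP => eD; last by rewrite eqxx.
move=> _; have -> : e :\: U = e by apply/setDidPl; exact: Ddisj.
by rewrite eD orbT.
Qed.

Lemma eval_Gt c c0 X : eval (Gt c c0) X = dotv c (Defs.projv D (vert X)) + c0.
Proof.
rewrite /eval (bigD1 set0) ?sub0set //= addrC ffunE eqxx; congr (_ + _).
rewrite /dotv big_mkcond; apply: eq_bigr => e _; rewrite !ffunE.
case: eqVneq => [->|ne] /=; first by rewrite andbF in_setD1 eqxx /= mulr0.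
rewrite andbT; case: (boolP (e \in D)) => eD; last by case: ifP; rewrite mulr0.
by rewrite (DC eD) /=; case: (e \subset X); rewrite ?mulr1 ?mulr0.
Qed.

Lemma Gt_zero c c0 : (forall X : {set V}, [disjoint X & U] -> eval (Gt c c0) X = 0) ->
  c0 = 0 /\ forall e, e \in D -> c e = 0.
Proof.
move=> hz.
have H : forall n (e : {set V}), (#|e| < n)%N -> Gt c c0 e = 0.
  elim=> [//|n IH] e; rewrite ltnS => hn.
  case: (boolP ((e == set0) || (e \in D))) => he; last first.
    by rewrite ffunE; move: he; rewrite negb_or => /andP[/negbTE -> /negbTE ->].
  have dj : [disjoint e & U].
    by case/orP: he => [/eqP ->|/Ddisj //]; rewrite -setI_eq0 set0I.
  have := hz e dj; rewrite /eval (bigD1 e) //= big1 ?addr0 // => e' /andP[sub ne'].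
  apply: IH; apply: leq_trans hn; apply: proper_card.
  by rewrite properEneq ne' sub.
split.
  by have := H _ set0 (ltnSn _); rewrite ffunE eqxx.
move=> e eD; have := H _ e (ltnSn _); rewrite ffunE eD.
by case: eqVneq eD => [->|//]; rewrite in_setD1 eqxx.
Qed.


Lemma core (F : vec -> Prop) (a : vec) b d (c : vec) c0 (u : V) z :
  (forall z, MP E z -> dotv a z <= b) -> (forall z, F z <-> MP E z /\ dotv a z = b) ->
  dim_eq (MP E : vec -> Prop) d -> dim_eq F (d - 1) -> u \in U -> MP E z -> z [set u] = 1 ->
  dotv a z != b ->
  (forall y, image_proj D (FU F U) y -> dotv c y + c0 = 0) ->
  c0 = 0 /\ forall e, e \in D -> c e = 0.
Proof.
move=> valid hF dP dF uU MPz zu az hc.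
pose h := foldr Top (Gt c c0) (enum U).
have hsupp : forall e, h e != 0 -> (e == set0) || (e \in C).
  move=> e he; apply: Qs_C; apply: (suppF _ (@Gt_Qs c c0) he).
  by apply/allP => x; rewrite mem_enum.
have hev : forall X, dotv h (vert X) + h set0 =
    if has (fun u => u \in X) (enum U) then 0 else dotv c (Defs.projv D (vert X)) + c0.
  by move=> X; rewrite -eval_dot // evalF eval_Gt.
have hasU : forall X : {set V}, [disjoint X & U] -> has (fun u => u \in X) (enum U) = false.
  move=> X dj; apply: negbTE; apply/hasPn => i; rewrite mem_enum => iU.
  by rewrite (disjointFl dj iU).
case: MPz => n [lam [p [l0 s1 mlp ->]]] in zu az *.
have MPp : forall k, MP E (p k).
  by move=> k; rewrite (ml_vert (mlp k)); exact: vert_MP.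
have [k /andP[lk ak]] : exists k, (lam k != 0) && (dotv a (p k) != b).
  apply/existsP; apply: contraT; rewrite negb_exists => /forallP H.
  have : dotv a (\sum_k scv (lam k) (p k)) + - b = 0.
    apply: conv_zero => // k lk; move: (H k); rewrite lk /= negbK => /eqP ->; exact: subrr.
  by move/eqP; rewrite subr_eq0 (negbTE az).
have pku : p k [set u] = 1.
  have T := conv_tight (p := p) (g := @delta R V [set u]) (g0 := -1) l0 s1.
  have H1 : forall k', dotv (@delta R V [set u]) (p k') - 1 <= 0.
    move=> k'; rewrite dotv_delta subr_le0.
    by case: (mlp k') => _ h01 _; case: (h01 u) => ->; rewrite ?ler01.
  have H2 : dotv (@delta R V [set u]) (\sum_k scv (lam k) (p k)) - 1 = 0.
    by rewrite dotv_delta zu subrr.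
  by have := T H1 H2 k lk; rewrite dotv_delta => /eqP; rewrite subr_eq0 => /eqP.
pose Y := [set i | p k [set i] == 1].
have pkY : p k = vert Y by exact: ml_vert.
have hvy : dotv h (p k) + h set0 = 0.
  rewrite pkY hev; case: hasP => // -[]; exists u; first by rewrite mem_enum.
  by rewrite inE pku.
have hvF : forall z', F z' -> dotv h z' + h set0 = 0.
  move=> z' /hF [[n' [lam' [p' [l0' s1' mlp' ->]]]] az'].
  have MPp' : forall k, MP E (p' k).
    by move=> k'; rewrite (ml_vert (mlp' k')); exact: vert_MP.
  have tight := conv_tight (p := p') (g := a) (g0 := - b) l0' s1'.
  apply: conv_zero => // k' lk'.
  have ak' : dotv a (p' k') = b.
    apply/eqP; rewrite -subr_eq0; apply/eqP; apply: tight => //.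
      by move=> j; rewrite subr_le0; apply: valid.
    by rewrite az' subrr.
  rewrite (ml_vert (mlp' k')) hev; set X := [set i | _].
  case: ifP => hX //.
  apply: hc; exists (vert X); split => //; split.
    by apply/hF; split; [exact: vert_MP | rewrite -(ml_vert (mlp' k'))].
  move=> I IU; rewrite vert_sing; case: ifP => // IX.
  by move/negbT: hX => /hasPn /(_ I); rewrite mem_enum IU IX => /(_ isT).
have van := facet_vanish hF dP dF (MPp k) ak hvF hvy.
apply: Gt_zero => X dj; rewrite eval_Gt.
by have := hev X; rewrite hasU // => <-; apply: van; exact: vert_MP.
Qed.

End Eval.
End Poly.

Theorem lemma6p1 (R : realFieldType) (V : finType) (E : {set {set V}})
  (F : {ffun {set V} -> R} -> Prop) (U : {set V}) :
  hypergraph E -> downward_closed E ->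
  is_facet (MP E) F ->
  (forall I, I \in U -> ~ V1 E F I) ->
  U != set0 ->
  EU E U = set0 \/ fulldim_in (EU E U :\ set0) (image_proj (EU E U :\ set0) (FU F U)).
Proof.
move=> hE dE [[a [b [valid hF]]] [d [dP dF]]] hU Un0.
case: (eqVneq (EU E U) set0) => [-> | EUn]; [by left | right].
have UC : U \in coords E.
  have [e1] := set0Pn _ EUn; rewrite in_set => /andP[_ hC].
  exact: (downC dE hC (subsetUr _ _) Un0).
split.
  by move=> y [z [_ ->]] e he; rewrite ffunE (negbTE he).
move=> k; split.
  move=> hk; rewrite lez_nat; apply: (affdim_le _ hk).
  by move=> y [z [_ ->]] e he; rewrite ffunE (negbTE he).
rewrite lez_nat => hk.
case: (dual_ind (image_proj (EU E U :\ set0) (FU F U)) hk) => // -[c [c0 [nz hc]]].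
exfalso.
have [u uU] := set0Pn _ Un0.
apply: (hU u uU) => z MPz zu; apply/hF; split => //.
apply/eqP; apply: contraT => az.
have [c00 ce] := core hE dE UC valid hF dP dF uU MPz zu az hc.
case: nz => [|[e eD]]; [by rewrite c00 eqxx | by rewrite ce ?eqxx].
Qed.
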